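(* Let $n\ge2$, let $a,b$ satisfy $0<a\le1$, $0<b\le\frac12$, $2a\ge1+b$, and let $0<c_0\le1$. If $F$ is an $(a,b)$-set of divergence, then $$\dim_H\big(F\cap[0,c_0]^n\big)\le \alpha:=\frac12+(n-1)a+b.$$
   Context: For $k\ge k_0$ let $R_k=2^k$, $D_k=R_k^{(n-(n-1)a+nb)/(n+1)}$, $Q_k=R_k^{\frac{n-1}{n+1}(2a-b-1)}$. A point $(p_1/q,\dots,p_n/q)$, $p_j,q\in\mathbb{Z}$, is an admissible fraction if $\gcd(p_1,q)=1$ and: $p_2,\dots,p_n$ arbitrary when $q$ is odd; all even when $q\equiv0\pmod4$; all odd when $q\equiv2\pmod4$. Fix $0<c\ll1$. Let $\mathcal{A}_k$ be the collection of axis-parallel boxes (''slabs'') of dimensions $cR_k^{-1/2}\times cR_k^{-1}\times\cdots\times cR_k^{-1}$ (long side in the $x_1$ direction) centered at $\big(2p_1R_k/(qD_k^2),p_2/(D_kq),\dots,p_n/(D_kq)\big)$ with $(p_1/q,\dots,p_n/q)$ admissible and $1\le q\le Q_k$; $F_k=\bigcup_{s\in\mathcal{A}_k}s$. The $(a,b)$-set of divergence is $F=\limsup_{k\to\infty}F_k=\bigcap_N\bigcup_{k\ge N}F_k$. $\dim_H$ denotes Hausdorff dimension. *)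

(* Defs.v *)
From HB Require Import structures.
From mathcomp Require Import all_boot all_order all_algebra.
From mathcomp Require Import all_classical all_reals all_analysis.
Import Order.TTheory GRing.Theory Num.Theory.
Local Open Scope classical_set_scope.
Local Open Scope ring_scope.

(* Points of R^n are functions 'I_n -> R; coordinate x_1 of the paper is index 0. *)

Definition edist (R : realType) (n : nat) (x y : 'I_n -> R) : R :=
  Num.sqrt (\sum_(i < n) (x i - y i) ^+ 2).

(* diameter (in \bar R; -oo for the empty set, +oo for unbounded sets) *)
Definition diam (R : realType) (n : nat) (A : set ('I_n -> R)) : \bar R :=
  ereal_sup [set (edist R n x y)%:E | x in A & y in A].

Definition hausdorff_pre (R : realType) (n : nat) (s delta : R)
  (E : set ('I_n -> R)) : \bar R :=
  ereal_inf [set (\sum_(0 <= k <oo) ((fine (diam R n (U k))) `^ s)%:E)%E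
            | U in [set U : nat -> set ('I_n -> R) |
                     E `<=` \bigcup_k U k /\ forall k, (diam R n (U k) <= delta%:E)%E]].

Definition hausdorff_measure (R : realType) (n : nat) (s : R)
  (E : set ('I_n -> R)) : \bar R :=
  ereal_sup [set hausdorff_pre R n s delta E | delta in [set d : R | 0 < d]].

Definition hausdorff_dim (R : realType) (n : nat) (E : set ('I_n -> R)) : \bar R :=
  ereal_inf [set s%:E | s in [set s : R | 0 <= s /\ hausdorff_measure R n s E = 0%E]].

Definition Rk (R : realType) (k : nat) : R := 2%:R ^+ k.
Definition Dk (R : realType) (n : nat) (a b : R) (k : nat) : R :=
  Rk R k `^ ((n%:R - (n%:R - 1) * a + n%:R * b) / (n%:R + 1)).
Definition Qk (R : realType) (n : nat) (a b : R) (k : nat) : R :=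
  Rk R k `^ ((n%:R - 1) / (n%:R + 1) * (2 * a - b - 1)).

(* (p_1/q, ..., p_n/q) is an admissible fraction; p_1 is p at index 0 *)
Definition admissible (n : nat) (p : 'I_n -> int) (q : int) : Prop :=
  (forall j : 'I_n, val j = 0%N -> coprimez (p j) q) /\
  (forall j : 'I_n, val j <> 0%N ->
     ((q %% 4)%Z = 0 -> (2 %| p j)%Z) /\
     ((q %% 4)%Z = 2 -> ~~ (2 %| p j)%Z)).

Definition slab (R : realType) (n : nat) (c : R) (k : nat) (ctr : 'I_n -> R)
  : set ('I_n -> R) :=
  [set x | forall j : 'I_n,
      `|x j - ctr j| <=
        (if val j == 0%N then c * (Rk R k `^ (- (1/2))) else c * (Rk R k)^-1) / 2].

Definition slab_center (R : realType) (n : nat) (a b : R) (k : nat)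
  (p : 'I_n -> int) (q : int) : 'I_n -> R :=
  fun j => if val j == 0%N
           then 2 * (p j)%:~R * Rk R k / (q%:~R * Dk R n a b k ^+ 2)
           else (p j)%:~R / (Dk R n a b k * q%:~R).

Definition Fk (R : realType) (n : nat) (a b c : R) (k : nat) : set ('I_n -> R) :=
  \bigcup_(pq in [set pq : ('I_n -> int) * int |
                   admissible n pq.1 pq.2 /\ 1 <= pq.2 /\ pq.2%:~R <= Qk R n a b k])
     slab R n c k (slab_center R n a b k pq.1 pq.2).

Definition div_set (R : realType) (n : nat) (a b c : R) (k0 : nat)
  : set ('I_n -> R) :=
  \bigcap_(N in [set: nat]) \bigcup_(k in [set k : nat | (N <= k)%N /\ (k0 <= k)%N])
     Fk R n a b c k.

Definition cube (R : realType) (n : nat) (c0 : R) : set ('I_n -> R) :=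
  [set x | forall j : 'I_n, 0 <= x j <= c0].

(* Main.v *)
Require Import Defs.
From HB Require Import structures.
From mathcomp Require Import all_boot all_order all_algebra.
From mathcomp Require Import all_classical all_reals all_analysis.
From mathcomp Require Import ring lra zify.
Import Order.TTheory GRing.Theory Num.Theory.
Local Open Scope classical_set_scope.
Local Open Scope ring_scope.

Module HA.


Lemma nat_aux (q : int) (t : nat) : (1 <= q)%R -> (`|q|%N <= t)%N -> (`|q|%N.-1 < t)%N.
Proof. lia. Qed.

Lemma absz_shift_lt (p : int) (P : nat) : (`|p|%N <= P)%N -> (`|(p + P%:Z)%R|%N < P.*2.+1)%N.
Proof. lia. Qed.

Lemma absz_shift_eq (p : int) (P : nat) : (`|p|%N <= P)%N -> ((`|(p + P%:Z)%R|%N)%:Z - P%:Z)%R = p.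
Proof. lia. Qed.

Lemma absz_qeq (q : int) : (1 <= q)%R -> (((`|q|%N.-1).+1)%:Z = q).
Proof. lia. Qed.

Section Aux.
Variable R : realType.

Lemma series_le_bound (u : nat -> \bar R) (x : \bar R) :
  (forall i, (0 <= u i)%E) -> (forall M, (\sum_(0 <= i < M) u i <= x)%E) ->
  (\sum_(i <oo) u i <= x)%E.
Proof.
move=> u0 hM; apply: lime_le; first exact: is_cvg_nneseries.
exact: nearW.
Qed.

Lemma geom_part (rho : R) N M : 0 <= rho < 1 ->
  \sum_(0 <= k < M) (if (N <= k)%N then rho ^+ k else 0) <= rho ^+ N / (1 - rho).
Proof.
move=> /andP[r0 r1].
have key : (1 - rho) * \sum_(0 <= k < M) (if (N <= k)%N then rho ^+ k else 0)
   + rho ^+ (maxn M N) = rho ^+ N.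
  elim: M => [|M IH]; first by rewrite big_geq // mulr0 add0r max0n.
  rewrite big_nat_recr //=.
  case: (leqP N M) => hNM.
    rewrite mulrDr -addrA.
    have -> : maxn M.+1 N = M.+1 by apply/maxn_idPl; exact: leqW.
    have e : maxn M N = M by apply/maxn_idPl.
    rewrite e in IH; rewrite -IH exprS; congr (_ + _); ring.
  rewrite addr0.
  have -> : maxn M.+1 N = N by apply/maxn_idPr.
  have e : maxn M N = N by apply/maxn_idPr; exact: ltnW.
  by rewrite e in IH.
have h1 : 0 < 1 - rho by rewrite subr_gt0.
rewrite ler_pdivlMr // mulrC -key lerDl.
exact: exprn_ge0.
Qed.


Lemma edist_ge0 n (x y : 'I_n -> R) : 0 <= Defs.edist R n x y.
Proof. exact: sqrtr_ge0. Qed.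

Lemma edist_refl n (x : 'I_n -> R) : Defs.edist R n x x = 0.
Proof.
rewrite /Defs.edist big1 ?sqrtr0 // => i _; by rewrite subrr expr0n.
Qed.

Lemma diam_set0 n : Defs.diam R n set0 = -oo%E.
Proof.
rewrite /Defs.diam (_ : image2 _ _ _ = set0) ?ereal_sup0 //.
by apply/seteqP; split => z //= [x []].
Qed.

Lemma diam_cases n (U : set ('I_n -> R)) :
  Defs.diam R n U = -oo%E \/ (0 <= Defs.diam R n U)%E.
Proof.
have [->|/set0P[x Ux]] := eqVneq U set0; first by left; exact: diam_set0.
  right; apply: (@le_trans _ _ ((Defs.edist R n x x)%:E)).
    by rewrite lee_fin edist_refl.
  by apply: ereal_sup_ubound; exists x => //; exists x.
Qed.

Lemma diam_le n (U : set ('I_n -> R)) (B : R) :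
  (forall x y, U x -> U y -> Defs.edist R n x y <= B) -> (Defs.diam R n U <= B%:E)%E.
Proof.
move=> h; apply: ge_ereal_sup => _ [x Ux [y Uy <-]].
by rewrite lee_fin; apply: h.
Qed.

Lemma pow_diam_le n (U : set ('I_n -> R)) s (B : R) : 0 < s -> 0 <= B ->
  (Defs.diam R n U <= B%:E)%E -> fine (Defs.diam R n U) `^ s <= B `^ s.
Proof.
move=> s0 B0 hB; case: (diam_cases _ U) => [->|h].
  by rewrite /= powR0 ?gt_eqF // powR_ge0.
move: hB h; case: (Defs.diam R n U) => //= r; rewrite !lee_fin => rB r0.
apply: ge0_ler_powR => //; rewrite ?nnegrE //; exact: ltW.
Qed.

Definition box {n} (y : 'I_n -> R) (h : R) : set ('I_n -> R) :=
  [set x | forall j, y j <= x j <= y j + h].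

Lemma diam_box n (y : 'I_n -> R) h : 0 <= h -> (Defs.diam R n (box y h) <= (n%:R * h)%:E)%E.
Proof.
move=> h0; apply: diam_le => x z hx hz.
rewrite /Defs.edist.
have hs : \sum_(i < n) (x i - z i) ^+ 2 <= (n%:R * h) ^+ 2.
  apply: (@le_trans _ _ (\sum_(i < n) h ^+ 2)).
    apply: ler_sum => i _.
    have := hx i; have := hz i => /andP[a1 a2] /andP[b1 b2].
    rewrite -real_normK ?num_real //.
    by rewrite lerXn2r ?nnegrE ?normr_ge0 // ler_norml; apply/andP; split; lra.
  rewrite sumr_const card_ord exprMn -[_ *+ n]mulr_natl.
  apply: ler_wpM2r; first exact: exprn_ge0.
  case: n {x z hx hz y} => [|m]; first by rewrite expr0n.
  by rewrite expr2 ler_peMl // ?ler1n // ler0n.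
apply: (@le_trans _ _ (Num.sqrt ((n%:R * h) ^+ 2))).
  exact: ler_wsqrtr.
by rewrite sqrtr_sqr ger0_norm // mulr_ge0 // ler0n.
Qed.


Lemma pre_le_cover n s (d : R) (E : set ('I_n -> R)) (V : nat -> nat -> set ('I_n -> R))
  (x : \bar R) : 0 < s ->
  E `<=` \bigcup_k \bigcup_i V k i ->
  (forall k i, (Defs.diam R n (V k i) <= d%:E)%E) ->
  (\sum_(k <oo) \sum_(i <oo) ((fine (Defs.diam R n (V k i))) `^ s)%:E <= x)%E ->
  (hausdorff_pre R n s d E <= x)%E.
Proof.
move=> s0 hE hd hx.
pose U (m : nat) : set ('I_n -> R) :=
  if (pickle_inv m : option (nat * nat)) is Some p then V p.1 p.2 else set0.
pose g (A : set ('I_n -> R)) := ((fine (Defs.diam R n A)) `^ s)%:E.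
have g0 A : (0 <= g A)%E by rewrite lee_fin powR_ge0.
have gset0 : g set0 = 0%E by rewrite /g diam_set0 /= powR0 // gt_eqF.
have h1 : (hausdorff_pre R n s d E <= \sum_(m <oo) g (U m))%E.
  apply: ereal_inf_lbound; exists U => //; split.
    move=> y /hE [k _ [i _ hy]]; exists (pickle (k, i)) => //.
    by rewrite /U pickleK_inv.
  move=> m; rewrite /U; case: (pickle_inv m : option (nat * nat)) => [p|] //.
  by rewrite diam_set0 leNye.
apply: le_trans h1 _; apply: le_trans hx; rewrite le_eqVlt; apply/orP; left; apply/eqP.
rewrite nneseries_esumT // (esumID (range (pickle : nat * nat -> nat))) //.
rewrite [X in (_ + X)%E]esum1 ?adde0; last first.
  move=> m [_ /= hm]; rewrite /U.
  case e: (pickle_inv m : option (nat * nat)) => [p|] //.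
  by exfalso; apply: hm; exists p => //; have := @pickle_invK (nat * nat)%type m; rewrite e.
have hinj : set_inj [set: nat * nat] (pickle : nat * nat -> nat).
  by move=> p q _ _; apply: (pcan_inj (@pickleK_inv (nat * nat)%type)).
rewrite setTI (esum_image _ _ _ hinj).
rewrite nneseries_esumT; last by move=> k; apply: nneseries_ge0 => i _ _; rewrite lee_fin powR_ge0.
have -> : [set: nat * nat] = [set: nat] `*`` (fun=> [set: nat]).
  by apply/seteqP; split.
rewrite (eq_esum (b := fun p : nat * nat => g (V p.1 p.2))); last first.
  by move=> p _; rewrite /U pickleK_inv.
rewrite -(esum_esum (a := fun k i => g (V k i))) //; apply: eq_esum => k _.
rewrite nneseries_esumT // => i; rewrite lee_fin powR_ge0.
by [].
Qed.


Lemma sum_ind_const (c : R) (sz M : nat) :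
  \sum_(0 <= i < M) (if (i < sz)%N then c else 0) = c * (minn M sz)%:R.
Proof.
elim: M => [|M IH]; first by rewrite big_geq // min0n mulr0.
rewrite big_nat_recr //= IH.
case: (ltnP M sz) => h.
  have -> : minn M.+1 sz = M.+1 by lia.
  by rewrite -natr1 mulrDr mulr1.
have -> : minn M.+1 sz = sz by lia.
by rewrite addr0.
Qed.

Lemma level_sum n s (L : seq (set ('I_n -> R))) (B : R) : 0 < s -> 0 <= B ->
  (forall A, A \in L -> (Defs.diam R n A <= B%:E)%E) ->
  (\sum_(i <oo) ((fine (Defs.diam R n (nth set0 L i))) `^ s)%:E
     <= ((size L)%:R * B `^ s)%:E)%E.
Proof.
move=> s0 B0 hL; apply: series_le_bound => [i|M]; first by rewrite lee_fin powR_ge0.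
apply: (@le_trans _ _ (\sum_(0 <= i < M) (if (i < size L)%N then B `^ s else 0)%:E)%E).
  apply: lee_sum => i _.
  case: (ltnP i (size L)) => hi.
    by rewrite lee_fin; apply: pow_diam_le => //; apply: hL; exact: mem_nth.
  by rewrite nth_default // diam_set0 /= powR0 ?gt_eqF.
rewrite sumEFin lee_fin sum_ind_const mulrC ler_wpM2r ?powR_ge0 // ler_nat.
exact: geq_minr.
Qed.


Section Geo.
Variables (m : nat) (a b c : R).
Local Notation nn := m.+2.

Definition rr k := Rk R k.
Definition Qv k := Qk R nn a b k.
Definition Dv k := Dk R nn a b k.
Definition P0 k := Num.truncn (Qv k * Dv k ^+ 2 / rr k).
Definition P1 k := Num.truncn (2 * Dv k * Qv k).
Definition Qn k := Num.truncn (Qv k).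
Definition Tn k := (Num.truncn (rr k `^ (1/2))).+1.
Definition Jt k := ('I_(Qn k) * 'I_((P0 k).*2.+1) *
   {ffun 'I_m.+1 -> 'I_((P1 k).*2.+1)} * 'I_(Tn k))%type.

Definition decp k (i0 : nat) (ir : 'I_m.+1 -> nat) : 'I_nn -> int :=
  fun j => if val j == 0%N then (i0%:Z - (P0 k)%:Z)%R
           else ((ir (inord (val j).-1))%:Z - (P1 k)%:Z)%R.

Definition lo k (idx : Jt k) : 'I_nn -> R :=
  fun j =>
  let ctr := slab_center R nn a b k
     (decp k (val idx.1.1.2) (fun i => val (idx.1.2 i))) (val idx.1.1.1).+1%:Z in
  if val j == 0%N then ctr j - rr k `^ (- (1/2)) / 2 + (val idx.2)%:R / rr k
  else ctr j - (rr k)^-1 / 2.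

Definition piece k (idx : Jt k) := box (lo k idx) (rr k)^-1.

Lemma rr_ge1 k : 1 <= rr k.
Proof. by rewrite /rr /Rk exprn_ege1 // ler1n. Qed.

Lemma rr_gt0 k : 0 < rr k.
Proof. exact: lt_le_trans (rr_ge1 k). Qed.

Lemma sq_facts k : 1 <= rr k `^ (1/2) /\ rr k `^ (- (1/2)) = (rr k `^ (1/2))^-1 /\
  rr k `^ (1/2) * rr k `^ (1/2) = rr k.
Proof.
have r1 := rr_ge1 k.
split; first by rewrite -[X in X <= _](powRr0 (rr k)); apply: ler_powR => //; lra.
split; first by rewrite powRN.
rewrite -powRD; last by rewrite gt_eqF ?implybT ?rr_gt0.
by rewrite (_ : 1/2 + 1/2 = 1) ?powRr1 ?(le_trans _ r1) //; field.
Qed.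


Lemma int_le_trunc (z : int) (X : R) : `|(z%:~R : R)| <= X -> (`|z|%N <= Num.truncn X)%N.
Proof.
move=> h; have X0 : 0 <= X by apply: le_trans h.
by rewrite truncn_ge_nat // natr_absz intr_norm.
Qed.

Lemma Dv_gt0 k : 0 < Dv k.
Proof. by rewrite /Dv /Dk powR_gt0 // -/(rr k) rr_gt0. Qed.

End Geo.
End Aux.

End HA.
Import HA.


Section Cov.
Variables (R : realType) (m : nat) (a b c : R).
Local Notation nn := m.+2.
Local Notation rr := (@rr R).
Local Notation Qv := (@Qv R m a b).
Local Notation Dv := (@Dv R m a b).
Local Notation P0 := (@P0 R m a b).
Local Notation P1 := (@P1 R m a b).
Local Notation Qn := (@Qn R m a b).
Local Notation Tn := (@Tn R).
Local Notation Jt := (@Jt R m a b).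
Local Notation piece := (@piece R m a b).
Local Notation lo := (@lo R m a b).
Local Notation decp := (@decp R m a b).

Lemma cover_piece k (x : 'I_nn -> R) (p : 'I_nn -> int) (q : int) :
  0 < c -> c <= 1 ->
  (forall j, 0 <= x j <= 1) ->
  (1 <= q)%R -> q%:~R <= Qv k ->
  slab R nn c k (slab_center R nn a b k p q) x ->
  exists idx : Jt k, piece k idx x.
Proof.
move=> c0 c1 hx q1 qQ hs.
have [sq1 [esqN esq]] := sq_facts R k.
have r0 := rr_gt0 R k; have r1 := rr_ge1 R k.
set r := rr k in sq1 esqN esq r0 r1 *.
set sq := r `^ (1/2) in sq1 esqN esq *.
have sq0 : 0 < sq by apply: lt_le_trans sq1.
have D0 := Dv_gt0 R m a b k.
set D := Dv k in D0 *.
set Q := Qv k in qQ *.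
have qr1 : 1 <= (q%:~R : R) by rewrite ler1z.
set qr := (q%:~R : R) in qr1 qQ.
set ctr := slab_center R nn a b k p q in hs.
have isq1 : sq^-1 <= 1 by rewrite invf_le1.
have ir1 : r^-1 <= 1 by rewrite invf_le1.
have isq0 : 0 < sq^-1 by rewrite invr_gt0.
have ir0 : 0 < r^-1 by rewrite invr_gt0.
have hw j : `|x j - ctr j| <= (if val j == 0%N then c * sq^-1 else c * r^-1) / 2.
  have := hs j; rewrite -/(rr k) -/r esqN -/sq.
  by case: (val j == 0%N).
have hctr j : `|ctr j| <= 3/2.
  have := hw j; have := hx j => /andP[x0 x1].
  have h1 : (if val j == 0%N then c * sq^-1 else c * r^-1) <= 1.
    case: (val j == 0%N).
      by rewrite -[1]mul1r ler_pM // ltW.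
    by rewrite -[1]mul1r ler_pM // ltW.
  move: h1; set w := (if _ then _ else _) => h1 h2.
  move: h2; rewrite !ler_norml => /andP[h3 h4]; apply/andP; split; lra.
have qn : (`|q|%N.-1 < Qn k)%N.
  have h : (`|q|%N <= Qn k)%N.
    by apply: int_le_trunc; rewrite -/qr ger0_norm //; lra.
  exact: nat_aux.
have hp0 : (`|p ord0|%N <= P0 k)%N.
  apply: int_le_trunc; rewrite -/(Qv k) -/Q -/D -/(rr k) -/r.
  set P := ((p ord0)%:~R : R).
  have D20 : 0 < D ^+ 2 by rewrite exprn_gt0.
  have eP : P = ctr ord0 * (qr * (D ^+ 2 / r) / 2).
    rewrite /ctr /slab_center /= -/(rr k) -/r -/(Dv k) -/D -/qr -/P.
    field; rewrite ?gt_eqF //; lra.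
  set z := D ^+ 2 / r.
  have z0 : 0 <= z by rewrite /z divr_ge0 // ltW.
  have h : `|P| <= 3/2 * (qr * z / 2).
    rewrite eP normrM (ger0_norm (_ : 0 <= qr * z / 2)); last first.
      by rewrite divr_ge0 // mulr_ge0 //; lra.
    by rewrite ler_wpM2r ?hctr // divr_ge0 // mulr_ge0 //; lra.
  rewrite -mulrA -/z; apply: le_trans h _.
  have -> : 3/2 * (qr * z / 2) = (3/4 * qr) * z by field.
  by rewrite ler_wpM2r //; lra.
have hpj j : val j != 0%N -> (`|p j|%N <= P1 k)%N.
  move=> hj; apply: int_le_trunc; rewrite -/(Qv k) -/Q -/(Dv k) -/D.
  set P := ((p j)%:~R : R).
  have eP : P = ctr j * (D * qr).
    rewrite /ctr /slab_center /= (negbTE hj) -/(rr k) -/r -/(Dv k) -/D -/qr -/P.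
    field; rewrite ?gt_eqF //; lra.
  have h : `|P| <= 3/2 * (D * qr).
    rewrite eP normrM (ger0_norm (_ : 0 <= D * qr)); last first.
      by rewrite mulr_ge0 //; lra.
    by rewrite ler_wpM2r ?hctr // mulr_ge0 //; lra.
  apply: le_trans h _.
  have -> : 3/2 * (D * qr) = D * (3/2 * qr) by ring.
  have -> : 2 * D * Q = D * (2 * Q) by ring.
  by rewrite ler_wpM2l ?(ltW D0) //; lra.
have csq : c * sq^-1 <= sq^-1 by rewrite -[X in _ <= X]mul1r ler_pM // ltW.
have cr : c * r^-1 <= r^-1 by rewrite -[X in _ <= X]mul1r ler_pM // ltW.
pose w := x ord0 - ctr ord0 + sq^-1 / 2.
have hw0 : 0 <= w <= sq^-1.
  have := hw ord0; rewrite /= ler_norml => /andP[h1 h2].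
  by apply/andP; split; rewrite /w; lra.
pose u := w * r.
have u0 : 0 <= u by rewrite /u mulr_ge0 //; [case/andP: hw0 | exact: ltW].
have usq : u <= sq.
  have -> : sq = sq^-1 * r by rewrite -esq mulKf // gt_eqF.
  by rewrite /u ler_wpM2r ?(ltW r0) //; case/andP: hw0.
have ht : (Num.truncn u < Tn k)%N.
  by rewrite /Tn ltnS -/(rr k) -/r -/sq le_truncn.
pose iq : 'I_(Qn k) := Ordinal qn.
pose i0 : 'I_((P0 k).*2.+1) := Ordinal (absz_shift_lt _ _ hp0).
pose ir : {ffun 'I_m.+1 -> 'I_((P1 k).*2.+1)} :=
  [ffun i => inord (`|(p (lift ord0 i) + (P1 k)%:Z)%R|%N)].
pose it : 'I_(Tn k) := Ordinal ht.
exists (iq, i0, ir, it).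
have edec : decp k (val i0) (fun i => val (ir i)) = p.
  apply/funext => j; rewrite /decp; case: eqP => hj.
    have -> : j = ord0 by apply: val_inj.
    exact: (absz_shift_eq _ _ hp0).
  have hj1 : ((val j).-1 < m.+1)%N by case: j hj => [[|jj] hjj] //=.
  have el : lift ord0 (inord (val j).-1 : 'I_m.+1) = j.
    apply: val_inj; rewrite /= /bump /= inordK // add1n.
    by case: j hj {hj1} => [[|jj] hjj].
  have hj' : val j != 0%N by apply/eqP.
  have hb := absz_shift_lt _ _ (hpj _ hj').
  rewrite ffunE /= el inordK //.
  exact: (absz_shift_eq _ _ (hpj _ hj')).
have eq' : ((val iq).+1%:Z = q) := absz_qeq _ q1.
rewrite /piece /box /lo /= edec eq' -/ctr => j.
case: eqP => hj.
  have ej : j = ord0 by apply: val_inj.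
  rewrite ej esqN -/sq -/(rr k) -/r.
  have [t1 t2] := andP (truncn_itv u0).
  set t := Num.truncn u in t1 t2 *.
  have h1 : t%:R / r <= w by rewrite ler_pdivrMr.
  have h2 : w < t%:R / r + r^-1.
    have -> : t%:R / r + r^-1 = t.+1%:R / r by rewrite -natr1 mulrDl mul1r.
    by rewrite ltr_pdivlMr.
  by apply/andP; split; rewrite /w in h1 h2; lra.
have := hw j; move/eqP/negbTE: hj => ->; rewrite ler_norml => /andP[h1 h2].
by rewrite -/(rr k) -/r; apply/andP; split; lra.
Qed.

End Cov.


Section Cnt.
Variables (R : realType) (m : nat) (a b : R).
Local Notation nn := m.+2.
Local Notation rr := (@rr R).
Local Notation Qv := (@Qv R m a b).
Local Notation Dv := (@Dv R m a b).
Local Notation P0 := (@P0 R m a b).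
Local Notation P1 := (@P1 R m a b).
Local Notation Qn := (@Qn R m a b).
Local Notation Tn := (@Tn R).
Local Notation Jt := (@Jt R m a b).

Lemma card_Jt k : #|{: Jt k}| = (Qn k * (P0 k).*2.+1 * (P1 k).*2.+1 ^ m.+1 * Tn k)%N.
Proof. by rewrite !card_prod card_ffun !card_ord. Qed.

Lemma nn_eq : (nn%:R : R) = m%:R + 2.
Proof. by rewrite -addn2 natrD. Qed.

Lemma count_expR (L : R) (g d : R) :
  let al := 1/2 + (nn%:R - 1) * a + b in
  g = (nn%:R - 1) / (nn%:R + 1) * (2 * a - b - 1) ->
  d = (nn%:R - (nn%:R - 1) * a + nn%:R * b) / (nn%:R + 1) ->
  0 <= b -> 0 <= L ->
  2 * (expR (g * L) * expR (g * L) * expR (d * L) ^+ 2 / expR L *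
        (expR (d * L) * expR (g * L)) ^+ m.+1 * expR (1/2 * L)) +
  expR (g * L) * (expR (d * L) * expR (g * L)) ^+ m.+1 * expR (1/2 * L)
  <= 3 * expR (al * L).
Proof.
move=> al eg ed b0 L0.
rewrite -expRN -!expRD -!expRM_natl -!expRD.
have e1 : g * L + g * L + 2%:R * (d * L) + - L + m.+1%:R * (d * L + g * L) + 1 / 2 * L
   = al * L.
  rewrite /al eg ed; have := nn_eq; rewrite -/(nn%:R) => ->.
  have -> : (m.+1%:R : R) = m%:R + 1 by rewrite -addn1 natrD.
  field; have : (0 : R) <= m%:R by rewrite ler0n.
  lra.
have e2 : g * L + m.+1%:R * (d * L + g * L) + 1 / 2 * L = al * L - b * L.
  rewrite /al eg ed; have := nn_eq; rewrite -/(nn%:R) => ->.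
  have -> : (m.+1%:R : R) = m%:R + 1 by rewrite -addn1 natrD.
  field; have : (0 : R) <= m%:R by rewrite ler0n.
  lra.
rewrite e1 e2.
have : expR (al * L - b * L) <= expR (al * L).
  by rewrite ler_expR; have := mulr_ge0 b0 L0; lra.
lra.
Qed.


Lemma count_bound k : 0 < a -> a <= 1 -> 0 < b -> 1 + b <= 2 * a ->
  (#|{: Jt k}|%:R : R) <= 6 * 5 ^+ m.+1 * rr k `^ (1/2 + (nn%:R - 1) * a + b).
Proof.
move=> a0 a1 b0 hab.
have r0 := rr_gt0 R k; have r1 := rr_ge1 R k.
set r := rr k in r0 r1 *.
set L := ln r.
have L0 : 0 <= L by apply: ln_ge0.
have er : r = expR L by rewrite /L lnK // posrE.
have hn : (0 : R) <= m%:R by rewrite ler0n.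
have en := nn_eq.
set g := (nn%:R - 1) / (nn%:R + 1) * (2 * a - b - 1).
set d := (nn%:R - (nn%:R - 1) * a + nn%:R * b) / (nn%:R + 1).
have g0 : 0 <= g.
  rewrite /g en; apply: mulr_ge0; last by lra.
  by apply: divr_ge0; lra.
have d0 : 0 <= d.
  rewrite /d en; apply: divr_ge0; last by lra.
  have : (m%:R + 2 - 1) * a <= m%:R + 2 - 1 by rewrite ler_piMr //; lra.
  have : 0 <= (m%:R + 2) * b by apply: mulr_ge0; lra.
  lra.
have eQ : Qv k = expR (g * L).
  by rewrite /HA.Qv /Qk /powR -/(rr k) -/r gt_eqF.
have eD : Dv k = expR (d * L).
  by rewrite /HA.Dv /Dk /powR -/(rr k) -/r gt_eqF.
have esq : r `^ (1/2) = expR (1/2 * L) by rewrite /powR gt_eqF.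
have eal : r `^ (1/2 + (nn%:R - 1) * a + b) = expR ((1/2 + (nn%:R - 1) * a + b) * L).
  by rewrite /powR gt_eqF.
have Q1 : 1 <= Qv k.
  rewrite eQ; apply: le_trans (expR_ge1Dx _); have := mulr_ge0 g0 L0; lra.
have D1 : 1 <= Dv k.
  rewrite eD; apply: le_trans (expR_ge1Dx _); have := mulr_ge0 d0 L0; lra.
have sq1 : 1 <= r `^ (1/2) by rewrite esq; apply: le_trans (expR_ge1Dx _); have := mulr_ge0 (_ : 0 <= 1/2) L0; lra.
set Q := Qv k in Q1 eQ *.
set D := Dv k in D1 eD *.
set sq := r `^ (1/2) in sq1 esq *.
have DQ1 : 1 <= D * Q by rewrite -[1]mulr1 ler_pM.
have hQn : (Qn k)%:R <= Q by rewrite /HA.Qn -/(Qv k) -/Q truncn_le; lra.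
have hP0 : ((P0 k).*2.+1)%:R <= 2 * (Q * D ^+ 2 / r) + 1.
  rewrite -addn1 -muln2 natrD natrM mulrC.
  have : ((P0 k)%:R : R) <= Q * D ^+ 2 / r.
    rewrite /HA.P0 -/(Qv k) -/Q -/(Dv k) -/D -/(rr k) -/r truncn_le.
    by rewrite divr_ge0 ?mulr_ge0 ?exprn_ge0 //; lra.
  lra.
have hP1 : ((P1 k).*2.+1)%:R <= 5 * (D * Q).
  rewrite -addn1 -muln2 natrD natrM mulrC.
  have : ((P1 k)%:R : R) <= 2 * D * Q.
    rewrite /HA.P1 -/(Qv k) -/Q -/(Dv k) -/D truncn_le.
    by rewrite !mulr_ge0 //; lra.
  rewrite -mulrA; lra.
have hT : (Tn k)%:R <= 2 * sq.
  rewrite /HA.Tn -/(rr k) -/r -/sq -addn1 natrD.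
  have : ((Num.truncn sq)%:R : R) <= sq by rewrite truncn_le; lra.
  lra.
rewrite card_Jt !natrM natrX.
apply: (@le_trans _ _ (Q * (2 * (Q * D ^+ 2 / r) + 1) * (5 * (D * Q)) ^+ m.+1 * (2 * sq))).
  have hX : ((P1 k).*2.+1)%:R ^+ m.+1 <= (5 * (D * Q)) ^+ m.+1.
    by apply: lerXn2r; rewrite ?nnegrE ?ler0n //; lra.
  by apply: (ler_pM _ _ (ler_pM _ _ (ler_pM _ _ hQn hP0) hX) hT);
    rewrite ?mulr_ge0 ?exprn_ge0 ?ler0n.
have -> : Q * (2 * (Q * D ^+ 2 / r) + 1) * (5 * (D * Q)) ^+ m.+1 * (2 * sq) =
  2 * 5 ^+ m.+1 * (2 * (Q * Q * D ^+ 2 / r * (D * Q) ^+ m.+1 * sq) +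
     Q * (D * Q) ^+ m.+1 * sq).
  rewrite exprMn; field; lra.
rewrite eal eQ eD esq {1}er.
have h3 := count_expR L g d erefl erefl (ltW b0) L0.
have -> : forall E : R, 6 * 5 ^+ m.+1 * E = 2 * 5 ^+ m.+1 * (3 * E) by move=> E; ring.
rewrite ler_pM2l ?mulr_gt0 ?exprn_gt0 //.
Qed.


Lemma level_bound k (s : R) : 0 < a -> a <= 1 -> 0 < b -> 1 + b <= 2 * a -> 0 < s ->
  (#|{: Jt k}|%:R : R) * ((nn%:R * (rr k)^-1) `^ s) <=
  (6 * 5 ^+ m.+1 * nn%:R `^ s) *
    (expR ((1/2 + (nn%:R - 1) * a + b - s) * ln 2)) ^+ k.
Proof.
move=> a0 a1 b0 hab s0.
have hc := count_bound k a0 a1 b0 hab.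
have r0 := rr_gt0 R k.
set r := rr k in r0 hc *.
set al := 1/2 + (nn%:R - 1) * a + b in hc *.
have eL : ln r = k%:R * ln 2 by rewrite /r /HA.rr /Rk lnXn // mulr_natl.
rewrite powRM ?ler0n ?invr_ge0 ?(ltW r0) //.
have -> : r^-1 `^ s = expR (- (s * ln r)).
  by rewrite /powR invr_eq0 gt_eqF // lnV ?posrE // mulrN.
have ea : r `^ al = expR (al * ln r) by rewrite /powR gt_eqF.
rewrite ea in hc.
have -> : expR ((al - s) * ln 2) ^+ k = expR (al * ln r) * expR (- (s * ln r)).
  by rewrite -expRM_natl -expRD eL; congr expR; ring.
have h0 : 0 <= nn%:R `^ s * expR (- (s * ln r)) by rewrite mulr_ge0 ?powR_ge0 ?expR_ge0.
have -> : 6 * 5 ^+ m.+1 * nn%:R `^ s * (expR (al * ln r) * expR (- (s * ln r))) =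
  (6 * 5 ^+ m.+1 * expR (al * ln r)) * (nn%:R `^ s * expR (- (s * ln r))) by ring.
by rewrite ler_wpM2r.
Qed.

End Cnt.


Lemma exists_N (R : realType) (k0 : nat) (x y rho : R) : 0 < x -> 0 < y ->
  0 <= rho < 1 -> exists N, (k0 <= N)%N /\ (2^-1) ^+ N < x /\ rho ^+ N < y.
Proof.
move=> x0 y0 /andP[r0 r1].
have h1 := nbhs_infty_ge k0.
have z1 : `|2^-1 : R| < 1 by rewrite ger0_norm ?invr_ge0 // invf_lt1 // ltr1n.
have z2 : `|rho| < 1 by rewrite ger0_norm.
have h2 : \forall t \near \oo, `|geometric 1 (2^-1 : R) t| < x.
  exact: (cvgr0_norm_lt _ (cvg_geometric 1 z1) _ x0).
have h3 : \forall t \near \oo, `|geometric 1 rho t| < y.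
  exact: (cvgr0_norm_lt _ (cvg_geometric 1 z2) _ y0).
have [N0 _ hN] := filterI h1 (filterI h2 h3).
exists N0; have [/= e1 [e2 e3]] := hN N0 (leqnn N0).
move: e2 e3; rewrite /= !mul1r !ger0_norm ?exprn_ge0 //.
Qed.

Section Main.
Variables (R : realType) (m : nat) (a b c c0 : R) (k0 : nat).
Local Notation nn := m.+2.
Hypotheses (a0 : 0 < a) (a1 : a <= 1) (b0 : 0 < b) (b1 : b <= 1/2) (hab : 1 + b <= 2 * a)
  (cpos : 0 < c) (c1 : c <= 1) (c0pos : 0 < c0) (c01 : c0 <= 1).
Local Notation E := (div_set R nn a b c k0 `&` cube R nn c0).
Local Notation al := (1/2 + (nn%:R - 1) * a + b).

Lemma al_gt0 : 0 < al.
Proof.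
have en := nn_eq R m; rewrite en.
have hm : (0 : R) <= m%:R by rewrite ler0n.
have : 0 <= (m%:R + 2 - 1) * a.
  apply: mulr_ge0; last exact: ltW.
  have -> : (m%:R + 2 - 1 : R) = m%:R + 1 by rewrite -addrA; congr (_ + _); lra.
  by rewrite addr_ge0.
move=> h; have h12 : (0 : R) < 1 / 2 by rewrite divr_gt0.
apply: addr_gt0 => //; apply: (lt_le_trans h12); by rewrite lerDl.
Qed.

Lemma pre_small s d e : al < s -> 0 < d -> 0 < e ->
  (hausdorff_pre R nn s d E <= e%:E)%E.
Proof.
move=> hs d0 e0.
have s0 : 0 < s by apply: lt_trans hs; exact: al_gt0.
set K := 6 * 5 ^+ m.+1 * nn%:R `^ s.
have K0 : 0 < K by rewrite /K !mulr_gt0 ?exprn_gt0 // powR_gt0.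
set rho := expR ((al - s) * ln 2).
have ln20 : 0 < ln (2 : R) by rewrite ln_gt0 // ltr1n.
have rho0 : 0 < rho by apply: expR_gt0.
have rho1 : rho < 1.
  by rewrite /rho expR_lt1 pmulr_llt0 // subr_lt0.
have hrho : 0 <= rho < 1 by rewrite (ltW rho0) rho1.
have hy : 0 < e * (1 - rho) / K by rewrite divr_gt0 // mulr_gt0 // subr_gt0.
have hx : 0 < d / nn%:R by rewrite divr_gt0 // ltr0n.
have [N [hN0 [hN1 hN2]]] := exists_N R k0 _ _ _ hx hy hrho.
pose L k := [seq piece R m a b k idx | idx <- enum {: Jt R m a b k}].
pose V k i := if (N <= k)%N then nth set0 (L k) i else set0.
have hB k : (N <= k)%N -> nn%:R * (rr R k)^-1 <= d.
  move=> hk.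
  have : (rr R k)^-1 <= (2^-1) ^+ N.
    rewrite exprVn lef_pV2 ?posrE ?exprn_gt0 ?rr_gt0 //.
    by rewrite /rr /Rk ler_weXn2l // ler1n.
  have nn0 : (0 : R) < nn%:R by rewrite ltr0n.
  move: hN1; rewrite ltr_pdivlMr // => hN1.
  move=> h; rewrite mulrC; apply: le_trans (ltW hN1).
  by rewrite ler_wpM2r // ltW.
have hL k A : A \in L k -> (Defs.diam R nn A <= (nn%:R * (rr R k)^-1)%:E)%E.
  move=> /mapP[idx _ ->].
  by apply: diam_box; rewrite invr_ge0 ltW // rr_gt0.
apply: (pre_le_cover R nn s d E V e%:E s0).
- move=> y [hyd hcube].
  have := hyd N Logic.I => -[k [hNk hk0] hFk].
  case: hFk => pq [hadm [hq1 hqQ]] hsl.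
  have hxx : forall j, 0 <= y j <= 1.
    by move=> j; have /andP[h1 h2] := hcube j; rewrite h1 (le_trans h2 c01).
  have [idx hidx] := cover_piece R m a b c k y pq.1 pq.2 cpos c1 hxx hq1 hqQ hsl.
  exists k => //; exists (index idx (enum {: Jt R m a b k})) => //.
  rewrite /V hNk /L (nth_map idx) ?index_mem ?mem_enum //.
  by rewrite nth_index ?mem_enum.
- move=> k i; rewrite /V; case: ifP => hk; last by rewrite diam_set0 leNye.
  case: (ltnP i (size (L k))) => hi; last by rewrite nth_default // diam_set0 leNye.
  apply: le_trans (hL k _ (mem_nth set0 hi)) _.
  by rewrite lee_fin hB.
apply: (@le_trans _ _ (\sum_(k <oo) (if (N <= k)%N then K * rho ^+ k else 0)%:E)%E).
  apply: lee_nneseries => [k _ _|k _].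
    by apply: nneseries_ge0 => i _ _; rewrite lee_fin powR_ge0.
  rewrite /V; case: ifP => hk; last first.
    apply: series_le_bound => [i|M]; first by rewrite lee_fin powR_ge0.
    rewrite big1 // => i _; rewrite diam_set0 /= powR0 ?gt_eqF //.
  apply: le_trans (level_sum R nn s (L k) _ s0 _ (hL k)) _.
    by rewrite mulr_ge0 ?ler0n // invr_ge0 ltW // rr_gt0.
  rewrite lee_fin /L size_map -cardE /K.
  exact: level_bound.
apply: series_le_bound => [k|M]; first by case: ifP; rewrite ?lee_fin ?mulr_ge0 ?exprn_ge0 // ltW.
rewrite sumEFin lee_fin.
have -> : \sum_(0 <= k < M) (if (N <= k)%N then K * rho ^+ k else 0) =
   K * \sum_(0 <= k < M) (if (N <= k)%N then rho ^+ k else 0).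
  by rewrite mulr_sumr; apply: eq_bigr => k _; case: ifP; rewrite ?mulr0.
apply: le_trans (ler_wpM2l (ltW K0) (geom_part R rho N M hrho)) _.
move: hN2; rewrite ltr_pdivlMr // => hN2.
have h1r : 0 < 1 - rho by rewrite subr_gt0.
rewrite mulrA ler_pdivrMr //.
by rewrite mulrC ltW.
Qed.


Lemma hm_zero s : al < s -> hausdorff_measure R nn s E = 0%E.
Proof.
move=> hs.
have s0 : 0 < s by apply: lt_trans hs; exact: al_gt0.
have pge0 d : (0 <= hausdorff_pre R nn s d E)%E.
  apply/ereal_infP => _ [U _ <-].
  by apply: nneseries_ge0 => i _ _; rewrite lee_fin powR_ge0.
have ple0 d : 0 < d -> (hausdorff_pre R nn s d E <= 0)%E.
  move=> d0; apply/lee_addgt0Pr => e e0; rewrite add0e.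
  exact: pre_small.
apply/eqP; rewrite eq_le; apply/andP; split.
  by apply: ge_ereal_sup => _ [d d0 <-]; exact: ple0.
apply: le_trans (pge0 1) _.
by apply: ereal_sup_ubound; exists 1 => //=; rewrite ltr01.
Qed.

Lemma dim_le : (hausdorff_dim R nn E <= al%:E)%E.
Proof.
apply/lee_addgt0Pr => e e0.
apply: ereal_inf_lbound; exists (al + e) => //.
split; first by rewrite addr_ge0 // ltW // al_gt0.
by apply: hm_zero; rewrite ltrDl.
Qed.

End Main.

Theorem theorem5p1 (R : realType) (n : nat) (a b c c0 : R) (k0 : nat)
  (F : set ('I_n -> R)) :
  (2 <= n)%N ->
  0 < a -> a <= 1 -> 0 < b -> b <= 1/2 -> 1 + b <= 2 * a ->
  0 < c -> c <= 1 ->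
  0 < c0 -> c0 <= 1 ->
  F = div_set R n a b c k0 ->
  (hausdorff_dim R n (F `&` cube R n c0) <= (1/2 + (n%:R - 1) * a + b)%:E)%E.
Proof.
case: n F => [|[|m]] F // _ a0 a1 b0 b1 hab cpos c1 c0pos c01 ->.
exact: dim_le.
Qed.
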